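(* Let $a,b$ be positive integers with $\gcd(a,b)=1$ such that $(\mathbb{Z}/(a^2+b^2)\mathbb{Z})^{\times}$ is cyclic, let $n_1$ be a positive integer and let $m$ be a positive integer such that $(a^2+b^2)n_1-m^4=u^2+(a^2+b^2)z^2+(a^2+b^2)w^2$ for some $u\in\mathbb{Z}$, $z,w\in\mathbb{N}$. Assume moreover that $\gcd(m,p)=1$ for every odd prime $p$ dividing $a^2+b^2$, and that if $\gcd(m,a^2+b^2)>1$ then $2\nmid ab$ and $\gcd(m,a^2+b^2)=2$. Then there exist $x,y\in\mathbb{Z}$ with $$x^2+y^2+z^2+w^2=n_1\quad\text{and}\quad ax+by=m^2.$$ If in addition $m^2\ge \sqrt{b^2 n_1}$ and $a\le b$, then $x,y\ge 0$.
   Context: $\mathbb{N}=\{0,1,2,\dots\}$. *)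

(* Defs.v *)
From mathcomp Require Import all_boot all_order all_algebra all_fingroup all_solvable all_field.
Set Implicit Arguments. Unset Strict Implicit. Unset Printing Implicit Defensive.

(* Main.v *)
Require Import Defs.
From mathcomp Require Import all_boot all_order all_algebra all_fingroup all_solvable all_field.
Import Order.TTheory GRing.Theory Num.Theory.
From mathcomp Require Import zify ring lra.
Set Implicit Arguments. Unset Strict Implicit. Unset Printing Implicit Defensive.

Lemma unit_sq1 (N : nat) (X : 'Z_N) : 1 < N -> cyclic (units_Zp N) ->
  X \is a GRing.unit -> (X ^+ 2 = 1)%R -> X = 1%R \/ X = (-1)%R.
Proof.
move=> N1 cyc Xu X2.
case: (eqVneq X 1%R) => [->|X1]; [by left|].
case: (eqVneq X (-1)%R) => [->|XN1]; [by right|]. exfalso.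
have N2 : (-1 : 'Z_N)%R != 1%R.
  apply/eqP=> h.
  have h2 : (2%:R : 'Z_N)%R = 0%R.
    by rewrite -[2]/(1+1)%N natrD -{1}h mulr1n addNr.
  have : 2 %% N = 0 by rewrite -val_Zp_nat // h2.
  move/eqP; rewrite -/(N %| 2) => /dvdn_leq => /(_ isT) HN.
  have eN : N = 2 by apply/eqP; rewrite eqn_leq HN.
  subst N.
  by move: X X1 XN1 Xu {X2} => [[|[|]] //] .
pose ux : {unit 'Z_N} := Sub X Xu.
pose um : {unit 'Z_N} := Sub (-1)%R (unitrN1 _).
have ord2 (v : {unit 'Z_N}) : (val v ^+ 2 = 1)%R -> v != 1%g -> #[v]%g = 2.
  move=> v2 v1.
  have d2 : #[v]%g %| 2.
    rewrite order_dvdn; apply/eqP/val_inj.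
    by rewrite FinRing.val_unitX v2 FinRing.val_unit1.
  have := dvdn_leq (isT : 0 < 2) d2; have := order_gt0 v.
  have : #[v]%g != 1 by rewrite order_eq1.
  lia.
have ox : #[ux]%g = 2.
  by apply: ord2.
have om : #[um]%g = 2.
  apply: ord2; first by rewrite /= sqrrN expr1n.
  by [].
have e : (<[ux]> == <[um]> :> {set _})%g.
  by rewrite (eq_subG_cyclic cyc) ?subsetT // -!/(order _) ox om.
have : ux \in <[um]>%g by rewrite -(eqP e) cycle_id.
case/cycleP=> k /(congr1 val) /=; rewrite FinRing.val_unitX /= -signr_odd.
by case: (odd k) => /= h; [move: XN1|move: X1]; rewrite h ?expr1 ?expr0 eqxx.
Qed.

Lemma sq_pm (N : nat) (D C : 'Z_N) : 1 < N -> cyclic (units_Zp N) ->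
  C \is a GRing.unit -> (D ^+ 2 = C ^+ 2)%R -> D = C \/ D = (- C)%R.
Proof.
move=> N1 cyc Cu h.
have Du : D \is a GRing.unit by rewrite -(unitrX_pos D (isT : 0 < 2)) h unitrX.
have X2 : ((D / C)%R ^+ 2 = 1)%R by rewrite exprMn exprVn h mulrV // unitrX.
have Xu : (D / C)%R \is a GRing.unit by rewrite unitrM Du unitrV.
case: (unit_sq1 N1 cyc Xu X2) => e; [left|right].
  by rewrite -(divrK Cu D) e mul1r.
by rewrite -(divrK Cu D) e mulN1r.
Qed.

Lemma PoszX' (n k : nat) : Posz (n ^ k) = (Posz n ^+ k)%R.
Proof. by elim: k => // k IH; rewrite expnS exprS PoszM IH. Qed.

Lemma cop_sum (a b : nat) : coprime a b -> coprime (a ^ 2 + b ^ 2) a.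
Proof.
move=> h; rewrite /coprime gcdnC (_ : a ^ 2 = a * a) // gcdnMDl.
exact: coprimeXr.
Qed.

Lemma cop_from (U K : nat) :
  (forall p, prime p -> p %| K -> p %| U -> False) -> coprime U K.
Proof.
move=> h; apply/negPn/negP => nc.
case: (posnP (gcdn U K)) => [g0|gpos].
  apply: (h 2 isT).
    by have := dvdn_gcdr U K; rewrite g0 dvd0n => /eqP ->.
  by have := dvdn_gcdl U K; rewrite g0 dvd0n => /eqP ->.
have g1 : 1 < gcdn U K.
  by move: nc gpos; rewrite /coprime; case: (gcdn U K) => [|[]].
have pp := pdiv_prime g1.
have pd := pdiv_dvd (gcdn U K).
apply: (h _ pp).
  exact: dvdn_trans pd (dvdn_gcdr _ _).
exact: dvdn_trans pd (dvdn_gcdl _ _).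
Qed.

Lemma Zn0 (N k : nat) : 1 < N -> (k%:R : 'Z_N)%R = 0%R <-> N %| k.
Proof.
move=> N1; split => [h|h].
  by move/(congr1 (@nat_of_ord _)): h; rewrite val_Zp_nat // => e; apply/eqP; rewrite e.
by apply: val_inj; rewrite /= val_Zp_nat //; apply/eqP.
Qed.

Lemma int_Zp0 (N : nat) (z : int) : 1 < N -> (z%:~R : 'Z_N)%R = 0%R ->
  (N%:Z %| z)%Z.
Proof.
move=> N1; case: z => n h; rewrite dvdzE /=.
  by apply/(Zn0 _ N1); rewrite -pmulrn in h.
apply/(Zn0 _ N1); move: h; rewrite NegzE mulrNz -pmulrn.
by move/eqP; rewrite oppr_eq0 => /eqP.
Qed.

Lemma nonneg_aux (a b n1 P x y : int) : (0 < a)%R -> (a <= b)%R -> (0 <= P)%R ->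
  (a * x + b * y = P)%R -> (x ^+ 2 + y ^+ 2 <= n1)%R -> (b ^+ 2 * n1 <= P ^+ 2)%R ->
  (0 <= x)%R /\ (0 <= y)%R.
Proof.
move=> az abz Pz E2 le1 Kz.
have bz : (0 < b)%R by apply: lt_le_trans abz.
have x2 : (0 <= x ^+ 2)%R by rewrite sqr_ge0.
have y2 : (0 <= y ^+ 2)%R by rewrite sqr_ge0.
have Hsq (t : int) : (P < b * t)%R -> (t ^+ 2 <= n1)%R -> False.
  move=> h th.
  have h1 : (0 < (b * t - P) * (b * t + P))%R by apply: mulr_gt0; lra.
  have h2 : (b ^+ 2 * t ^+ 2 <= b ^+ 2 * n1)%R.
    by apply: ler_wpM2l => //; rewrite sqr_ge0.
  have e : ((b * t - P) * (b * t + P) = b ^+ 2 * t ^+ 2 - P ^+ 2)%R by ring.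
  rewrite e in h1; lra.
split.
  rewrite leNgt; apply/negP => xn.
  have axn : (a * x < 0)%R by rewrite pmulr_rlt0.
  apply: (Hsq y); lra.
rewrite leNgt; apply/negP => yn.
have byn : (b * y < 0)%R by rewrite pmulr_rlt0.
have ax1 : (P < a * x)%R by lra.
have xp : (0 < x)%R by rewrite -(pmulr_rgt0 _ az); lra.
have bx : (a * x <= b * x)%R by rewrite ler_wpM2r // ltW.
apply: (Hsq x); lra.
Qed.

Theorem mainTheorem6 (a b n1 m z w : nat) (u : int) :
  0 < a -> 0 < b -> coprime a b ->
  cyclic (units_Zp (a ^ 2 + b ^ 2)) ->
  0 < n1 -> 0 < m ->
  ((a ^ 2 + b ^ 2)%:Z * n1%:Z - (m ^ 4)%:Z
     = u ^+ 2 + (a ^ 2 + b ^ 2)%:Z * (z ^ 2)%:Z + (a ^ 2 + b ^ 2)%:Z * (w ^ 2)%:Z)%R ->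
  (forall p : nat, prime p -> odd p -> p %| a ^ 2 + b ^ 2 -> coprime m p) ->
  (1 < gcdn m (a ^ 2 + b ^ 2) -> odd (a * b) /\ gcdn m (a ^ 2 + b ^ 2) = 2) ->
  exists x y : int,
    (x ^+ 2 + y ^+ 2 + (z ^ 2)%:Z + (w ^ 2)%:Z = n1%:Z)%R /\
    (a%:Z * x + b%:Z * y = (m ^ 2)%:Z)%R /\
    ((sqrtC ((b ^ 2 * n1)%:R : algC) <= (m ^ 2)%:R)%R -> a <= b ->
       (0 <= x)%R /\ (0 <= y)%R).
Proof.
move=> a0 b0 cab cyc n0 m0 H hp hg.
have N1 : 1 < a ^ 2 + b ^ 2.
  have : 0 < a ^ 2 by rewrite expn_gt0 a0.
  have : 0 < b ^ 2 by rewrite expn_gt0 b0.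
  lia.
have copa : coprime (a ^ 2 + b ^ 2) a by exact: cop_sum.
have copb : coprime (a ^ 2 + b ^ 2) b.
  by rewrite addnC; apply: cop_sum; rewrite coprime_sym.
have hNz : ((a ^ 2 + b ^ 2)%:Z = a%:Z ^+ 2 + b%:Z ^+ 2)%R by rewrite PoszD !PoszX'.
set N := a ^ 2 + b ^ 2 in H hp hg cyc N1 copa copb hNz *.
pose U := `|u|%N.
have hu : (u ^+ 2 = U%:Z ^+ 2)%R by rewrite /U abszE real_normK ?num_real.
have Hn : N * n1 = (m ^ 2) ^ 2 + U ^ 2 + N * z ^ 2 + N * w ^ 2.
  apply/eqP; rewrite -eqz_nat; apply/eqP.
  rewrite !PoszD !PoszM.
  rewrite (_ : m ^ 4 = (m ^ 2) ^ 2) in H; last by rewrite -expnM.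
  rewrite !PoszX' hu in H.
  by move/eqP: H; rewrite subr_eq => /eqP ->; ring.
have dvdNm : N %| (m ^ 2) ^ 2 + U ^ 2.
  have : N %| N * n1 by apply: dvdn_mulr.
  by rewrite Hn -addnA dvdn_addl // dvdn_add // dvdn_mulr.
pose A : 'Z_N := (a%:R)%R. pose B : 'Z_N := (b%:R)%R.
pose Mm : 'Z_N := ((m ^ 2)%:R)%R. pose Uu : 'Z_N := (U%:R)%R.
have hAB : (A ^+ 2 + B ^+ 2 = 0)%R.
  by rewrite /A /B -!natrX -natrD; apply/Zn0.
have hMU : (Mm ^+ 2 + Uu ^+ 2 = 0)%R.
  by rewrite /Mm /Uu -!natrX -natrD; apply/Zn0.
have Au : A \is a GRing.unit by rewrite unitZpE.
have Bu : B \is a GRing.unit by rewrite unitZpE.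
have hDC : ((A * Mm) ^+ 2 = (B * Uu) ^+ 2)%R.
  have eB : (B ^+ 2 = - A ^+ 2)%R by apply/eqP; rewrite -addr_eq0 addrC hAB.
  have eM : (Mm ^+ 2 = - Uu ^+ 2)%R by apply/eqP; rewrite -addr_eq0 hMU.
  by rewrite !exprMn eB eM mulrN mulNr.
have pm (p : nat) : prime p -> p %| N -> p %| U -> p %| m.
  move=> pp pN pU.
  have : p %| (m ^ 2) ^ 2 + U ^ 2 by apply: dvdn_trans dvdNm.
  rewrite dvdn_addl; last by rewrite Euclid_dvdX // pU.
  by rewrite !Euclid_dvdX // andbT => /andP [].
have S : (A * Mm = B * Uu \/ A * Mm = - (B * Uu))%R.
  have [cm|ncm] := boolP (coprime m N).
    apply: sq_pm => //.
    rewrite unitrM Bu unitZpE // coprime_sym.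
    apply: cop_from => p pp pN pU.
    have pmm := pm p pp pN pU.
    have : p %| gcdn m N by rewrite dvdn_gcd pmm.
    by rewrite (eqP cm) dvdn1 => /eqP p1; rewrite p1 in pp.
  have [oab g2] : odd (a * b) /\ gcdn m N = 2.
    apply: hg; move: ncm; rewrite /coprime.
    have : 0 < gcdn m N by rewrite gcdn_gt0 m0.
    by case: (gcdn m N) => [|[]].
  move: oab; rewrite oddM => /andP [oa ob].
  have ea := odd_double_half a; rewrite oa -mul2n in ea.
  have eb := odd_double_half b; rewrite ob -mul2n in eb.
  set i := a./2 in ea. set j := b./2 in eb.
  pose M := 2 * (i * i + i + j * j + j) + 1.
  have hNM : N = 2 * M.
    rewrite /N -ea -eb /M /=. ring.
  have oM : odd M by rewrite /M addn1 /= oddM.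
  have m2 : 2 %| m by rewrite -g2 dvdn_gcdl.
  have U2 : 2 %| U.
    have : 2 %| (m ^ 2) ^ 2 + U ^ 2.
      by apply: dvdn_trans dvdNm; rewrite hNM dvdn_mulr.
    rewrite dvdn_addr; last by apply: dvdn_exp => //; apply: dvdn_exp.
    by rewrite Euclid_dvdX // andbT.
  have MN : M %| N by rewrite hNM dvdn_mull.
  have copUM : coprime U M.
    apply: cop_from => p pp pM pU.
    have op : odd p.
      apply/negP => /negP; rewrite -dvdn2 => p2.
      by move: oM; rewrite -[odd M]negbK -dvdn2 (dvdn_trans p2 pM).
    have pN : p %| N by apply: dvdn_trans MN.
    have := hp p pp op pN.
    rewrite /coprime => /eqP g1.
    have : p %| gcdn m p by rewrite dvdn_gcd (pm p pp pN pU) dvdnn.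
    by rewrite g1 dvdn1 => /eqP p1; rewrite p1 in pp.
  have copbM : coprime b M by apply: coprime_dvdr MN _; rewrite coprime_sym.
  pose Mr : 'Z_N := (M%:R)%R.
  have M20 : (2%:R * Mr = 0)%R by rewrite /Mr -natrM -hNM; apply/Zn0.
  have C'u : (B * Uu + Mr)%R \is a GRing.unit.
    rewrite /B /Uu /Mr -natrM -natrD unitZpE // hNM coprimeMl.
    apply/andP; split.
      have oU : ~~ odd U by rewrite -dvdn2.
      by rewrite coprime_sym coprimen2 oddD oddM (negbTE oU) andbF oM.
    by rewrite /coprime addnC gcdnDl -/(coprime M (b * U)) coprime_sym coprimeMl copbM copUM.
  have E (x : 'Z_N) : ((x + Mr) ^+ 2 = x ^+ 2 + Mr ^+ 2 + (2%:R * Mr) * x)%R.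
    by ring.
  have h2 : ((A * Mm + Mr) ^+ 2 = (B * Uu + Mr) ^+ 2)%R.
    by rewrite !E M20 !mul0r hDC.
  case: (sq_pm N1 cyc C'u h2) => e; [left|right].
    exact: (addIr Mr).
  have : (A * Mm = - (B * Uu + Mr) - Mr)%R by rewrite -e addrK.
  move=> ->.
  transitivity (- (B * Uu) - 2%:R * Mr)%R; first by ring.
  by rewrite M20 subr0.
have [s [s2 hs]] : exists s : int,
    (s ^+ 2 = 1)%R /\ (A * Mm = s%:~R * (B * Uu))%R.
  case: S => e; [exists 1%R | exists (-1)%R]; split => //.
    by rewrite e mulr1z mul1r.
  by rewrite e mulrN1z mulN1r.
pose X : int := (a%:Z * (m ^ 2)%:Z - s * b%:Z * U%:Z)%R.
pose Y : int := (b%:Z * (m ^ 2)%:Z + s * a%:Z * U%:Z)%R.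
have hX : ((X%:~R : 'Z_N) = 0)%R.
  rewrite /X intrB !intrM -!pmulrn -/A -/B -/Mm -/Uu hs.
  by rewrite mulrA subrr.
have hY : ((Y%:~R : 'Z_N) = 0)%R.
  apply: (mulrI Au); rewrite mulr0 /Y intrD !intrM -!pmulrn -/A -/B -/Mm -/Uu.
  transitivity (B * (A * Mm) + s%:~R * A ^+ 2 * Uu)%R; first by ring.
  rewrite hs.
  transitivity (s%:~R * Uu * (A ^+ 2 + B ^+ 2))%R; first by ring.
  by rewrite hAB mulr0.
have dX := int_Zp0 N1 hX.
have dY := int_Zp0 N1 hY.
have ex : ((X %/ N)%Z * N%:Z = X)%R := divzK dX.
have ey : ((Y %/ N)%Z * N%:Z = Y)%R := divzK dY.
set x := (X %/ N)%Z in ex *.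
set y := (Y %/ N)%Z in ey *.
have Nz0 : (N%:Z != 0)%R.
  by apply/eqP => -[] h; move: N1; rewrite h.
have hXY : (X ^+ 2 + Y ^+ 2 = N%:Z * (((m ^ 2)%:Z) ^+ 2 + U%:Z ^+ 2))%R.
  rewrite /X /Y hNz.
  transitivity ((a%:Z ^+ 2 + b%:Z ^+ 2) * (((m ^ 2)%:Z) ^+ 2 + s ^+ 2 * U%:Z ^+ 2))%R.
    by ring.
  by rewrite s2 mul1r.
have Hnz : (N%:Z * n1%:Z = ((m ^ 2)%:Z) ^+ 2 + U%:Z ^+ 2 + N%:Z * (z ^ 2)%:Z
           + N%:Z * (w ^ 2)%:Z)%R.
  by rewrite -!PoszX' -!PoszM -!PoszD Hn.
have E1 : (x ^+ 2 + y ^+ 2 + (z ^ 2)%:Z + (w ^ 2)%:Z = n1%:Z)%R.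
  apply: (mulfI (x := (N%:Z ^+ 2)%R)); first by rewrite expf_neq0.
  transitivity ((x * N%:Z) ^+ 2 + (y * N%:Z) ^+ 2
      + N%:Z * (N%:Z * (z ^ 2)%:Z + N%:Z * (w ^ 2)%:Z))%R; first by ring.
  rewrite ex ey hXY.
  transitivity (N%:Z * (N%:Z * n1%:Z))%R; last by ring.
  by rewrite Hnz; ring.
have E2 : (a%:Z * x + b%:Z * y = (m ^ 2)%:Z)%R.
  apply: (mulfI Nz0).
  transitivity (a%:Z * (x * N%:Z) + b%:Z * (y * N%:Z))%R; first by ring.
  by rewrite ex ey /X /Y hNz; ring.
exists x, y; split => //; split => // hsq ab.
have K : b ^ 2 * n1 <= (m ^ 2) ^ 2.
  have := hsq; rewrite -(ler_pXn2r (isT : 0 < 2)) ?nnegrE ?ler0n ?sqrtC_ge0 //.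
  by rewrite sqrtCK -natrX ler_nat.
have Kz : ((b%:Z) ^+ 2 * n1%:Z <= ((m ^ 2)%:Z) ^+ 2)%R.
  by rewrite -!PoszX' -PoszM lez_nat.
have le1 : (x ^+ 2 + y ^+ 2 <= n1%:Z)%R.
  by rewrite -E1 -addrA lerDl addr_ge0.
apply: (nonneg_aux _ _ _ E2 le1 Kz).
- by rewrite ltz_nat.
- by rewrite lez_nat.
- by [].
Qed.
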